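(* Let $\Gamma$ be a group and $0\to\mathbb{Z}\to\widehat{\Gamma}\to\Gamma\to1$ a central extension. Let $\widehat{\phi}$ be an automorphism of $\widehat{\Gamma}$ with $\widehat{\phi}(\mathbb{Z})=\mathbb{Z}$, and let $\phi$ be the automorphism of $\Gamma$ induced by $\widehat{\phi}$. Then for every $<\ \in LO_{\mathbb{Z}}(\widehat{\Gamma})$, the order $<_{\widehat{\phi}}$ belongs to $LO_{\mathbb{Z}}(\widehat{\Gamma})$, and $\pi_{\widehat{\Gamma}}^*(<_{\widehat{\phi}}) = \big(\pi_{\widehat{\Gamma}}^*(<)\big)_{\phi}$. That is, $\pi_{\widehat{\Gamma}}^*\circ\widehat{\phi}^* = \phi^*\circ\pi_{\widehat{\Gamma}}^*$ on $LO_{\mathbb{Z}}(\widehat{\Gamma})$, where $\widehat{\phi}^*(<)=<_{\widehat{\phi}}$ and $\phi^*(c)=c_\phi$.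
   Context: A left order on a group is a total order invariant under left multiplication. For an automorphism $\psi$ and a left order $<$, $g_1<_\psi g_2$ iff $\psi(g_1)<\psi(g_2)$. For a circular order $c$ (a map $\Gamma^3\to\{0,\pm1\}$ vanishing on triples with repeated entries, satisfying the cocycle identity $c(g_2,g_3,g_4)-c(g_1,g_3,g_4)+c(g_1,g_2,g_4)-c(g_1,g_2,g_3)=0$ and left invariance), $c_\phi(g_1,g_2,g_3)=c(\phi(g_1),\phi(g_2),\phi(g_3))$. A subgroup $\Lambda$ is cofinal for a left order $<$ on $\widehat{\Gamma}$ if for every $g\in\widehat{\Gamma}$ there exist $\lambda_1,\lambda_2\in\Lambda$ with $\lambda_1<g<\lambda_2$; $LO_{\mathbb{Z}}(\widehat{\Gamma})$ is the set of left orders on $\widehat{\Gamma}$ for which the central subgroup $\mathbb{Z}$ is cofinal. The map $\pi_{\widehat{\Gamma}}^*\colon LO_{\mathbb{Z}}(\widehat{\Gamma})\to CO(\Gamma)$ is defined as follows: given $<$, let $z$ be the generator of $\mathbb{Z}$ with $1<z$; for $\gamma\in\Gamma$ let $\widehat{\gamma}$ be the unique lift of $\gamma$ with $1\le\widehat{\gamma}<z$; for distinct $\gamma_1,\gamma_2,\gamma_3\in\Gamma$ let $\sigma$ be the permutation with $\widehat{\gamma}_{\sigma(1)}<\widehat{\gamma}_{\sigma(2)}<\widehat{\gamma}_{\sigma(3)}$ and set $\pi_{\widehat{\Gamma}}^*(<)(\gamma_1,\gamma_2,\gamma_3)=\mathrm{sign}(\sigma)$; on triples with repeated entries the value is $0$.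 *)

(* Defs.v *)
From HB Require Import structures.
From mathcomp Require Import all_boot all_order all_algebra.
From Stdlib Require Import ClassicalEpsilon.
Set Implicit Arguments. Unset Strict Implicit. Unset Printing Implicit Defensive.

Local Open Scope group_scope.

Section Defs.
Variables (G : groupType).

Definition is_hom (H : groupType) (f : G -> H) : Prop :=
  forall x y : G, f (x * y) = f x * f y.

Definition is_aut (f : G -> G) : Prop := is_hom f /\ bijective f.

Definition is_left_order (lt : G -> G -> Prop) : Prop :=
  [/\ (forall x, ~ lt x x),
      (forall x y w, lt x y -> lt y w -> lt x w),
      (forall x y, x <> y -> lt x y \/ lt y x) &
      (forall g x y, lt x y -> lt (g * x) (g * y))].

Definition order_pullback (psi : G -> G) (lt : G -> G -> Prop) : G -> G -> Prop :=
  fun g1 g2 => lt (psi g1) (psi g2).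

Definition cofinal (L : G -> Prop) (lt : G -> G -> Prop) : Prop :=
  forall g, exists l1 l2, L l1 /\ L l2 /\ lt l1 g /\ lt g l2.

End Defs.

Definition Zsub (Gh : groupType) (i : int -> Gh) : Gh -> Prop :=
  fun g => exists n : int, g = i n.

Definition LO_Z (Gh : groupType) (i : int -> Gh) (lt : Gh -> Gh -> Prop) : Prop :=
  is_left_order lt /\ cofinal (Zsub i) lt.

Definition central_extension (Gh Ga : groupType) (i : int -> Gh) (p : Gh -> Ga)
  : Prop :=
  [/\ (forall m n : int, i (m + n)%R = i m * i n) /\ injective i,
      (forall (n : int) (g : Gh), i n * g = g * i n),
      is_hom p,
      (forall y : Ga, exists g, p g = y) &
      (forall g : Gh, p g = 1 <-> exists n, g = i n)].

Definition circ_pullback (Ga : groupType) (phi : Ga -> Ga) (c : Ga -> Ga -> Ga -> int)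
  : Ga -> Ga -> Ga -> int :=
  fun g1 g2 g3 => c (phi g1) (phi g2) (phi g3).

Section PiStar.
Variables (Gh Ga : groupType) (i : int -> Gh) (p : Gh -> Ga) (lt : Gh -> Gh -> Prop).

Definition zgen : Gh :=
  epsilon (inhabits 1) (fun z => (z = i 1%R \/ z = i (-1)%R) /\ lt 1 z).

Definition hat_lift (gam : Ga) : Gh :=
  epsilon (inhabits 1)
    (fun g => p g = gam /\ (g = 1 \/ lt 1 g) /\ lt g zgen).

(* sign of the permutation sigma with a_sigma(1) < a_sigma(2) < a_sigma(3):
   +1 for the even permutations (id and the two 3-cycles), -1 otherwise *)
Definition sort_sign (a1 a2 a3 : Gh) : int :=
  if excluded_middle_informative
       ((lt a1 a2 /\ lt a2 a3) \/ (lt a2 a3 /\ lt a3 a1) \/ (lt a3 a1 /\ lt a1 a2))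
  then 1%R else (-1)%R.

Definition pi_star : Ga -> Ga -> Ga -> int :=
  fun g1 g2 g3 =>
    if [&& g1 != g2, g2 != g3 & g1 != g3]
    then sort_sign (hat_lift g1) (hat_lift g2) (hat_lift g3)
    else 0%R.

End PiStar.

(* Main.v *)
Require Import Defs.
From mathcomp Require Import all_boot all_order all_algebra.
From mathcomp Require Import zify.
From Stdlib Require Import ClassicalEpsilon FunctionalExtensionality.
Set Implicit Arguments. Unset Strict Implicit. Unset Printing Implicit Defensive.
Import GRing.Theory Num.Theory.
Local Open Scope ring_scope.
Local Open Scope group_scope.

Lemma int_unit (m n : int) : (m * n = 1)%R -> n = 1%R \/ n = (-1)%R.
Proof.
move=> h. have : (n <= -2)%R \/ n = (-1)%R \/ n = 0%R \/ n = 1%R \/ (2 <= n)%R by lia.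
case=> [h1|[->|[h1|[->|h1]]]]; try by [left|right].
- have : (m <= -1)%R \/ (0 <= m)%R by lia. case=> h2; nia.
- subst; rewrite mulr0 in h; by [].
- have : (m <= 0)%R \/ (1 <= m)%R by lia. case=> h2; nia.
Qed.

Section HomFacts.
Variables (G H : groupType) (f : G -> H).
Hypothesis fhom : is_hom f.
Lemma hom1 : f 1 = 1.
Proof. apply: (@mulgI _ (f 1)); by rewrite -fhom !mulg1. Qed.
Lemma homV x : f x^-1 = (f x)^-1.
Proof. apply/esym/mulg1_eq; by rewrite -fhom mulgV hom1. Qed.
End HomFacts.

Section IntHom.
Variables (G : groupType).
Definition ihom (f : int -> G) := forall m n : int, f (m + n)%R = f m * f n.
Lemma ihom0 f : ihom f -> f 0%R = 1.
Proof. move=> hf; apply: (@mulgI _ (f 0%R)); by rewrite -hf addr0 mulg1. Qed.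
Lemma ihomN f n : ihom f -> f (- n)%R = (f n)^-1.
Proof. move=> hf; apply/esym/mulg1_eq; by rewrite -hf subrr ihom0. Qed.
Lemma ihom_uniq f g : ihom f -> ihom g -> f 1%R = g 1%R -> forall k, f k = g k.
Proof.
move=> hf hg h1.
have hn : forall n : nat, f n%:Z = g n%:Z.
  elim=> [|n IH]; first by rewrite !ihom0.
  have -> : (n.+1)%:Z = (n%:Z + 1)%R by lia.
  by rewrite hf hg IH h1.
case=> n; first exact: hn.
by rewrite NegzE !ihomN // hn.
Qed.
End IntHom.

Section LOZ.
Variables (Gh : groupType) (i : int -> Gh) (lt : Gh -> Gh -> Prop).
Hypothesis hi : ihom i.
Hypothesis iinj : injective i.
Hypothesis hLO : LO_Z i lt.

Let irr : forall x, ~ lt x x. Proof. by case: hLO => -[]. Qed.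
Let tr : forall x y w, lt x y -> lt y w -> lt x w. Proof. by case: hLO => -[]. Qed.
Let tot : forall x y, x <> y -> lt x y \/ lt y x. Proof. by case: hLO => -[]. Qed.
Let linv : forall g x y, lt x y -> lt (g * x) (g * y). Proof. by case: hLO => -[]. Qed.
Let cof : cofinal (Zsub i) lt. Proof. by case: hLO. Qed.

Lemma linv' g x y : lt (g * x) (g * y) -> lt x y.
Proof. by move=> h; have := linv g^-1 h; rewrite !mulKg. Qed.

Lemma not_both : ~ (lt 1 (i 1%R) /\ lt 1 (i (-1)%R)).
Proof.
case=> h1 h2. have := linv (i (-1)%R) h1.
rewrite mulg1 -hi addNr ihom0 // => h3. exact: irr (tr h3 h2).
Qed.

Lemma zgen_ex : exists z, (z = i 1%R \/ z = i (-1)%R) /\ lt 1 z.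
Proof.
have : i 1%R <> 1 by move=> h; move: h; rewrite -(ihom0 hi) => /iinj.
move/tot => [h|h]; last by exists (i 1%R); split; [left|].
exists (i (-1)%R); split; first by right.
have := linv (i (-1)%R) h. by rewrite mulg1 -hi addNr ihom0.
Qed.

Lemma zgen_spec : exists a : int, (a = 1%R \/ a = (-1)%R) /\ zgen i lt = i a /\ lt 1 (i a).
Proof.
have := epsilon_spec (inhabits 1) _ zgen_ex; rewrite -/(zgen i lt) /=.
case=> -[E|E] h; rewrite E in h *; [exists 1%R | exists (-1)%R]; do !split=> //; by [left|right].
Qed.

Lemma zgen_uniq z : (z = i 1%R \/ z = i (-1)%R) /\ lt 1 z -> z = zgen i lt.
Proof.
have [a [ha [-> hz]]] := zgen_spec.
case=> -[->|->] h; case: ha hz => -> hz //; case: not_both; by split.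
Qed.

Section WithA.
Variable a : int.
Hypothesis ha : a = 1%R \/ a = (-1)%R.
Hypothesis hz : lt 1 (i a).

Let e (n : int) := i (n * a)%R.
Let eD m n : e (m + n)%R = e m * e n. Proof. by rewrite /e mulrDl hi. Qed.
Let e0 : e 0%R = 1. Proof. by rewrite /e mul0r ihom0. Qed.
Let e1 : e 1%R = i a. Proof. by rewrite /e mul1r. Qed.
Let eall b : i b = e (b * a)%R.
Proof. rewrite /e -mulrA; by case: ha => ->; rewrite ?mulr1 ?mulrNN ?mulr1. Qed.

Definition le x y := x = y \/ lt x y.

Lemma le_lt_tr x y w : le x y -> lt y w -> lt x w.
Proof. by case=> [->|h] // h'; exact: tr h h'. Qed.
Lemma lt_le_tr x y w : lt x y -> le y w -> lt x w.
Proof. by move=> h [<-|h'] //; exact: tr h h'. Qed.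
Lemma le_tr x y w : le x y -> le y w -> le x w.
Proof. case=> [->|h] //; case=> [<-|h']; right => //; exact: tr h h'. Qed.
Lemma le_linv g x y : le x y -> le (g * x) (g * y).
Proof. case=> [->|h]; [left|right] => //; exact: linv. Qed.

Lemma e_pos (k : nat) : lt 1 (e k.+1%:Z).
Proof.
elim: k => [|k IH]; first by rewrite e1.
have -> : (k.+2)%:Z = (k.+1%:Z + 1)%R by lia.
rewrite eD e1. apply: tr IH _. have := linv (e k.+1%:Z) hz. by rewrite mulg1.
Qed.

Lemma lt_e m n : (m < n)%R -> lt (e m) (e n).
Proof.
move=> h. have -> : n = (m + (`|n - m|.-1).+1%:Z)%R by lia.
rewrite eD. have := linv (e m) (e_pos (`|n - m|.-1)). by rewrite mulg1.
Qed.

Lemma le_e m n : (m <= n)%R -> le (e m) (e n).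
Proof.
move=> h. have : m = n \/ (m < n)%R by lia.
by case=> [->|h']; [left|right; exact: lt_e].
Qed.

Lemma lt_e_inv m n : lt (e m) (e n) -> (m < n)%R.
Proof.
move=> h. have : n = m \/ (n < m)%R \/ (m < n)%R by lia.
case=> [E|[h'|//]]; first by subst; case: (irr h).
case: (irr (tr h (lt_e h'))).
Qed.

Lemma between g : exists n, le (e n) g /\ lt g (e (n + 1)%R).
Proof.
have [l1 [l2 [[b1 ->] [[b2 ->] [h1 h2]]]]] := cof g.
rewrite eall in h1; rewrite eall in h2.
set m1 := (b1 * a)%R in h1; set m2 := (b2 * a)%R in h2.
have hm : (m1 < m2)%R by apply: lt_e_inv; exact: tr h1 h2.
have main : forall k : nat, le (e m1) g -> lt g (e (m1 + k%:Z)%R) ->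
   exists n, le (e n) g /\ lt g (e (n + 1)%R).
  elim=> [|k IH] hl hr.
    rewrite addr0 in hr; case: (irr (le_lt_tr hl hr)).
  have [E|] := classic (g = e (m1 + k%:Z)%R).
    exists (m1 + k%:Z)%R; split; first by left.
    by move: hr; rewrite E; have -> : (m1 + k.+1%:Z = m1 + k%:Z + 1)%R by lia.
  move/tot => [h|h]; first exact: IH.
  exists (m1 + k%:Z)%R; split; first by right.
  by move: hr; have -> : (m1 + k.+1%:Z = m1 + k%:Z + 1)%R by lia.
apply: (main `|m2 - m1|%N); first by right.
by have -> : (m1 + `|m2 - m1|%N%:Z)%R = m2 by lia.
Qed.

Variables (Ga : groupType) (p : Gh -> Ga).
Hypothesis phom : is_hom p.
Hypothesis pker : forall g : Gh, p g = 1 <-> exists n, g = i n.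

Definition Plift gam g := p g = gam /\ (g = 1 \/ lt 1 g) /\ lt g (i a).

Lemma lift_ex g0 : exists h, Plift (p g0) h.
Proof.
have [n [hl hr]] := between g0.
exists (e (- n)%R * g0); split.
  rewrite phom. have -> : p (e (- n)%R) = 1 by apply/pker; eexists.
  by rewrite mul1g.
split.
  have := le_linv (e (- n)%R) hl. rewrite -eD addNr e0. by case=> [<-|]; [left|right].
have := linv (e (- n)%R) hr. rewrite -eD.
have -> : (- n + (n + 1) = 1)%R by lia.
by rewrite e1.
Qed.

Lemma lift_half h h' m : h = e m * h' -> (1 <= m)%R -> h' = 1 \/ lt 1 h' -> lt h (i a) -> False.
Proof.
move=> E hm h1 h2.
have {}h1 : le 1 h' by case: h1 => [->|]; [left|right].
have h3 : le (i a) h.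
  rewrite E -e1. apply: le_tr (le_e hm) _.
  have := le_linv (e m) h1. by rewrite mulg1.
case: (irr (le_lt_tr h3 h2)).
Qed.

Lemma lift_uniq gam h h' : Plift gam h -> Plift gam h' -> h = h'.
Proof.
move=> [ph [h1 h2]] [ph' [h1' h2']].
have : p (h * h'^-1) = 1 by rewrite phom (homV phom) ph ph' mulgV.
move/pker => [k Ek].
have E : h = e (k * a)%R * h' by rewrite -eall -Ek mulgVK.
have : (k * a = 0)%R \/ (1 <= k * a)%R \/ (k * a <= -1)%R by lia.
case=> [Z|[P|N]].
- by rewrite E Z e0 mul1g.
- case: (lift_half E P h1' h2).
- have E' : h' = e (- (k * a))%R * h by rewrite E mulgA -eD addNr e0 mul1g.
  have P : (1 <= - (k * a))%R by lia.
  case: (lift_half E' P h1 h2').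
Qed.

End WithA.

End LOZ.

Theorem lemma4p3 (Gh Ga : groupType) (i : int -> Gh) (p : Gh -> Ga)
  (phihat : Gh -> Gh) (phi : Ga -> Ga) :
  central_extension i p ->
  is_aut phihat ->
  (* phihat(Z) = Z *)
  (forall g, Zsub i g -> Zsub i (phihat g)) ->
  (forall g, Zsub i g -> exists h, Zsub i h /\ phihat h = g) ->
  (* phi is the automorphism of Gamma induced by phihat *)
  (forall g : Gh, p (phihat g) = phi (p g)) ->
  forall lt : Gh -> Gh -> Prop, LO_Z i lt ->
    LO_Z i (order_pullback phihat lt) /\
    pi_star i p (order_pullback phihat lt) = circ_pullback phi (pi_star i p lt).
Proof.
move=> [[ihm iinj] icen phom psurj pker] [phhom phbij] hZ1 hZ2 hphi lt hLO.
have hi : ihom i := ihm.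
set lt' := order_pullback phihat lt.
have phinj : injective phihat := bij_inj phbij.
have hLO' : LO_Z i lt'.
  case: hLO => [[irr tr tot linv] cof]; split; [split|].
  - move=> x; exact: irr.
  - move=> x y w; exact: tr.
  - move=> x y nxy; apply: tot => E; apply: nxy; exact: phinj.
  - move=> g x y h; rewrite /lt' /order_pullback !phhom; exact: linv.
  - move=> g; have [l1 [l2 [Z1 [Z2 [h1 h2]]]]] := cof (phihat g).
    have [k1 [Zk1 E1]] := hZ2 _ Z1. have [k2 [Zk2 E2]] := hZ2 _ Z2.
    exists k1, k2; do !split => //; rewrite /lt' /order_pullback; by rewrite ?E1 ?E2.
split => //.
have [n En] : Zsub i (phihat (i 1%R)) by apply: hZ1; exists 1%R.
have hcomp : forall k, phihat (i k) = i (k * n)%R.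
  apply: ihom_uniq.
  - move=> x y; by rewrite hi phhom.
  - move=> x y; by rewrite mulrDl hi.
  - by rewrite En mul1r.
have hn : n = 1%R \/ n = (-1)%R.
  have [h [[m Em] E]] : exists h, Zsub i h /\ phihat h = i 1%R by apply: hZ2; exists 1%R.
  rewrite Em hcomp in E. apply: (@int_unit m). exact: iinj.
have [a [ha [za hza]]] := zgen_spec hi iinj hLO.
have [a' [ha' [za' hza']]] := zgen_spec hi iinj hLO'.
have hzz : phihat (zgen i lt') = zgen i lt.
  apply: (zgen_uniq hi iinj hLO); split; last first.
    by move: hza'; rewrite /lt' /order_pullback (hom1 phhom) -za'.
  rewrite za' hcomp; case: ha' => ->; case: hn => ->; by [left|right].
have hatP : forall (l : Gh -> Gh -> Prop) b, LO_Z i l -> zgen i l = i b ->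
    (b = 1%R \/ b = (-1)%R) -> l 1 (i b) ->
    forall g0, Plift i l b p (p g0) (hat_lift i p l (p g0)).
  move=> l b hl zb hb hlb g0. rewrite /hat_lift zb.
  exact: (epsilon_spec (inhabits 1) (fun g => Plift i l b p (p g0) g)
            (lift_ex hi hl hb hlb phom pker g0)).
have hhat : forall gam, phihat (hat_lift i p lt' gam) = hat_lift i p lt (phi gam).
  move=> gam. have [g0 <-] := psurj gam.
  have [h1 [h2 h3]] := hatP _ _ hLO' za' ha' hza' g0.
  rewrite -hphi.
  apply: (lift_uniq hi hLO ha hza phom pker); last exact: (hatP _ _ hLO za ha hza).
  split; first by rewrite hphi h1.
  split.
    case: h2 => [->|h2]; [left; exact: hom1 | right].
    by move: h2; rewrite /lt' /order_pullback (hom1 phhom).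
  by move: h3; rewrite /lt' /order_pullback -za' hzz za.
have phiinj : injective phi.
  move=> x y. have [gx <-] := psurj x. have [gy <-] := psurj y.
  rewrite -!hphi => E.
  have : p (phihat (gx * gy^-1)) = 1.
    by rewrite phhom phom (homV phhom) (homV phom) E mulgV.
  move/pker => [k Ek].
  have [h [[k0 Ek0] Eh]] : exists h, Zsub i h /\ phihat h = i k by apply: hZ2; exists k.
  rewrite Ek0 -Ek in Eh. have /phinj Eg := Eh.
  have : p (gx * gy^-1) = 1 by rewrite -Eg; apply/pker; exists k0.
  rewrite phom (homV phom) => /eqP; rewrite mulg_eq1 invgK => /eqP //.
apply: functional_extensionality => g1.
apply: functional_extensionality => g2.
apply: functional_extensionality => g3.
rewrite /circ_pullback /pi_star !(inj_eq phiinj).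
case: ifP => // _.
change (sort_sign lt (phihat (hat_lift i p lt' g1)) (phihat (hat_lift i p lt' g2))
          (phihat (hat_lift i p lt' g3)) =
        sort_sign lt (hat_lift i p lt (phi g1)) (hat_lift i p lt (phi g2))
          (hat_lift i p lt (phi g3))).
by rewrite !hhat.
Qed.
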